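(* Let $(V,h)$ be an object of $\mathrm{Herm}(\mathrm{sVect})$ whose Hermitian pairing has signature $(p_1,p_2,p_3,p_4)$. Then the dual super Hermitian vector space $V^*$, equipped with the dual Hermitian pairing, has signature $(p_1,p_2,p_4,p_3)$.
   Context: $\mathrm{sVect}$: finite-dimensional complex $\mathbb{Z}/2$-graded vector spaces with even linear maps, graded tensor product and Koszul braiding $v\otimes w\mapsto(-1)^{|v||w|}w\otimes v$. $V^*$ is the graded space of all linear functionals, $T^*(f)=f\circ T$, with evaluation $f\otimes v\mapsto f(v)$; this is the chosen dual functor. Anti-involution $dV=\overline{V}^*$ (identified with $\overline{V^*}$ by $\bar f(\bar v)=\overline{f(v)}$), monoidal structure $\chi(\bar f\otimes\bar g)(\bar v\otimes\bar w)=(-1)^{|g||v|}\overline{f(v)g(w)}$, $\eta_V(v)=\Phi_v$ with $\Phi_v(f)=(-1)^{|f||v|}f(v)$. $\mathrm{Herm}(\mathrm{sVect})$: objects $(V,h)$ with $h\colon V\to dV$ an even isomorphism with $d(h)\circ\eta_V=h$; equivalently $V$ with a nondegenerate sesquilinear form $\langle\cdot,\cdot\rangle$, $V_0\perp V_1$, $\langle v,w\rangle=(-1)^{|v||w|}\overline{\langle w,v\rangle}$. An orthonormal basis is a homogeneous basis $e_1,\dots,e_n$ with $\langle e_i,e_j\rangle=\delta_{ij}\langle e_j,e_j\rangle$ and $\langle e_j,e_j\rangle\in\{\pm1,\pm i\}$; the signature $(p_1,p_2,p_3,p_4)$ counts the $j$ with $\langle e_j,e_j\rangle$ equal to $+1,-1,+i,-i$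 respectively. The dual Hermitian pairing on $V^*$ is the composite $V^*\xrightarrow{(h^* )^{-1}}(dV)^*\cong d(V^* )$, where the last isomorphism is the canonical uniqueness-of-duals isomorphism (both are duals of $dV$, using that $d$ is symmetric monoidal). *)

(* Defs.v *)
From HB Require Import structures.
From mathcomp Require Import all_boot all_order all_algebra.
From mathcomp Require Import complex.
From mathcomp Require Import reals.

Set Implicit Arguments.
Unset Strict Implicit.
Unset Printing Implicit Defensive.

Import Order.TTheory GRing.Theory Num.Theory.
Local Open Scope ring_scope.

Section SuperHermitian.
Variable C : numClosedFieldType.

(* A Z/2-graded space is a finite-dimensional C-vector space W together with
   its even part and odd part, given as predicates [W0] and [W1].  A vector is
   homogeneous if it lies in W0 or W1. *)

Definition gpart (W : Type) (W0 W1 : W -> Prop) (b : bool) : W -> Prop :=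
  if b then W1 else W0.

Definition superHermitian (V : vectType C) (V0 V1 : {vspace V})
    (B : V -> V -> C) : Prop :=
  [/\ (forall a v v' w, B (a *: v + v') w = a * B v w + B v' w),
      (forall a v w w', B v (a *: w + w') = a^* * B v w + B v w'),
      (forall v, (forall w, B v w = 0) -> v = 0),
      (forall v w, v \in V0 -> w \in V1 -> B v w = 0 /\ B w v = 0) &
      (forall (a b : bool) v w,
         gpart (fun x => x \in V0) (fun x => x \in V1) a v ->
         gpart (fun x => x \in V0) (fun x => x \in V1) b w ->
         B v w = (-1) ^+ (a && b) * (B w v)^*)].

Definition has_signature (W : vectType C) (W0 W1 : W -> Prop)
    (Q : W -> W -> C) (p1 p2 p3 p4 : nat) : Prop :=
  exists e : seq W,
    [/\ basis_of fullv e,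
        (forall x, x \in e -> W0 x \/ W1 x),
        (forall i j, (i < size e)%N -> (j < size e)%N -> i != j ->
             Q e`_i e`_j = 0),
        (forall x, x \in e -> Q x x \in [:: 1; -1; 'i; - 'i]) &
        [/\ p1 = count (fun x => Q x x == 1) e,
            p2 = count (fun x => Q x x == -1) e,
            p3 = count (fun x => Q x x == 'i) e &
            p4 = count (fun x => Q x x == - 'i) e]].

(* The dual super vector space V^* : all linear functionals on V, graded by
   degree (C is purely even): a functional is even iff it kills V1 and odd
   iff it kills V0. *)
Definition dualSpace (V : vectType C) := 'Hom(V, C^o).

Definition dual_even (V : vectType C) (V1 : {vspace V}) (f : dualSpace V) : Prop :=
  forall v, v \in V1 -> f v = 0.
Definition dual_odd (V : vectType C) (V0 : {vspace V}) (f : dualSpace V) : Prop :=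
  forall v, v \in V0 -> f v = 0.

(* The dual Hermitian pairing on V^*, i.e. the pairing associated with the
   composite V^* --(h^* )^{-1}--> (dV)^* ~= d(V^* ), where h v = <v, .> in dV.
   Unfolding the definitions, the canonical isomorphism
   (dV)^* ~= d(V^* ) is the identity once dV = conj(V)^* is identified with
   conj(V^* ), and one gets:  <f, g>_* = F(conj g) with F o h = f, i.e.
   <f, g>_* = f v  whenever  h v = conj g,  i.e.  g u = conj <v, u> for all u.
   Since h is bijective this determines <.,.>_* uniquely. *)
Definition is_dual_pairing (V : vectType C) (B : V -> V -> C)
    (Bs : dualSpace V -> dualSpace V -> C) : Prop :=
  forall (f g : dualSpace V) (v : V),
    (forall u, g u = (B v u)^*) -> Bs f g = f v.

End SuperHermitian.

(* Main.v *)
Require Import Defs.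
From HB Require Import structures.
From mathcomp Require Import all_boot all_order all_algebra.
From mathcomp Require Import complex.
From mathcomp Require Import reals.
Import Order.TTheory GRing.Theory Num.Theory.
Local Open Scope ring_scope.

Section G.
Variable (R : realType) (V : vectType R[i]) (B : V -> V -> R[i]).
Hypothesis HB2 : forall a v w w', B v (a *: w + w') = a^* * B v w + B v w'.
Variable x : V.
Definition gfun (u : V) : R[i]^o := (B x u)^*.
Fact gfun_lin : linear gfun.
Proof. by move=> a u w; rewrite /gfun HB2 rmorphD rmorphM /= conjCK. Qed.
HB.instance Definition _ := GRing.isLinear.Build R[i] V R[i]^o *:%R gfun gfun_lin.
Definition gdual : dualSpace V := linfun gfun.
Lemma gdualE u : gdual u = (B x u)^*. Proof. by rewrite lfunE. Qed.
End G.

Lemma convC (R : realType) (z w : R[i]) : (z^* == w) = (z == w^*).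
Proof. by apply/eqP/eqP => [<-|->]; rewrite conjCK. Qed.


Lemma zero_notin (R : realType) : (0 : R[i]) \notin [:: 1; -1; 'i; - 'i].
Proof.
rewrite !inE !negb_or eq_sym oner_eq0 eq_sym oppr_eq0 oner_eq0 eq_sym.
have h : ('i : R[i]) != 0 by exact: neq0Ci.
by rewrite h eq_sym oppr_eq0 h.
Qed.

Lemma conj_in (C : numClosedFieldType) (z : C) :
  z \in [:: 1; -1; 'i; - 'i] -> z^* \in [:: 1; -1; 'i; - 'i].
Proof.
rewrite !inE => /or4P[] /eqP ->; rewrite ?rmorphN /= ?rmorph1 ?conjCi ?opprK eqxx ?orbT //.
Qed.

Section CC.
Variable C : numClosedFieldType.
Lemma ccv (z w : C) : (z == w) = (z^* == w^*).
Proof. by apply/eqP/eqP => [->|/(congr1 Num.conj)]; rewrite ?conjCK. Qed.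
Lemma cc1 (z : C) : (z == 1) = (z^* == 1). Proof. by rewrite ccv rmorph1. Qed.
Lemma cc2 (z : C) : (z == -1) = (z^* == -1). Proof. by rewrite ccv rmorphN rmorph1. Qed.
Lemma cc3 (z : C) : (z == - 'i) = (z^* == 'i).
Proof. by rewrite ccv rmorphN /= conjCi opprK. Qed.
Lemma cc4 (z : C) : (z == 'i) = (z^* == - 'i).
Proof. by rewrite ccv conjCi. Qed.
End CC.

Theorem mainTheorem16 (R : realType) (V : vectType R[i]) (V0 V1 : {vspace V})
    (B : V -> V -> R[i]) (Bs : dualSpace V -> dualSpace V -> R[i])
    (p1 p2 p3 p4 : nat) :
  (V0 + V1)%VS = fullv -> directv (V0 + V1) ->
  superHermitian V0 V1 B ->
  has_signature (fun v => v \in V0) (fun v => v \in V1) B p1 p2 p3 p4 ->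
  is_dual_pairing B Bs ->
  has_signature (dual_even V1) (dual_odd V0) Bs p1 p2 p4 p3.
Proof.
move=> _ _ [H1 H2 H3 H4 H5] [e [Hb Hhom Horth Hval [-> -> -> ->]]] HBs.
pose G := @gdual _ _ B.
have BsG y z : Bs (G y) (G z) = (B y z)^*.
  by rewrite (HBs _ _ z) ?(@gdualE _ _ _ H2) // => u; rewrite (@gdualE _ _ _ H2).
have Hnz y : y \in e -> B y y != 0.
  move/Hval; apply: contraTneq => ->; exact: zero_notin.
exists (map G e); split.
- rewrite basisEfree subvf /=; apply/andP; split.
  + suff: free (map_tuple G (in_tuple e)) by []. apply/freeP => k.
    move=> Hk i; move/(congr1 (fun f : dualSpace V => f e`_i)): Hk.
    rewrite sum_lfunE zero_lfunE (bigD1 i) //= big1 => [|j ji].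
      rewrite scale_lfunE addr0 /= (nth_map 0) // (@gdualE _ _ _ H2).
      move/eqP; rewrite mulf_eq0 conjC_eq0 (negPf (Hnz _ (mem_nth 0 (ltn_ord i)))).
      by rewrite orbF => /eqP.
    rewrite scale_lfunE /= (nth_map 0) // (@gdualE _ _ _ H2) Horth //.
    by rewrite conjC0; apply: scaler0.
  + rewrite size_map dimvf /=.
    change (dim V * 1 <= size e)%N; rewrite muln1 -dimvf.
    by move: Hb; rewrite basisEfree => /and3P[].
- move=> y /mapP[z ze ->]; case: (Hhom z ze) => [z0|z1].
    by left=> v v1; rewrite (@gdualE _ _ _ H2); have [-> _] := H4 z v z0 v1; rewrite conjC0.
  by right=> v v0; rewrite (@gdualE _ _ _ H2); have [_ ->] := H4 v z v0 z1; rewrite conjC0.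
- rewrite size_map => i j hi hj hij; rewrite !(nth_map 0) // BsG Horth //.
  exact: conjC0.
- move=> y /mapP[z ze ->]; rewrite BsG; exact: conj_in (Hval z ze).
- split; rewrite count_map; apply: eq_count => y /=; rewrite BsG.
  + exact: cc1.
  + exact: cc2.
  + exact: cc3.
  + exact: cc4.
Qed.
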